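(* For every $x\in\Gamma$ and $t\in\Gamma'_x$, the function $P_{x,t}$ defined below is a polynomial with real coefficients and positive leading coefficient. For every nonreal $z$ there is a nonzero function $v:\Gamma\to\mathbb C$ with $Jv=zv$ on all of $\Gamma$ and $v(t)=P_{x,t}(z)$ for all $t\in\Gamma'_x$. Moreover, if $y\in\Gamma_x$ and $t\in\Gamma'_y$ (so $\Gamma'_y\subset\Gamma'_x$), then $P_{y,t}$ divides $P_{x,t}$.
   Context: Let $\Gamma$ be an infinite connected tree whose vertices are arranged in levels $\ell(x)\in\{0,1,2,\dots\}$: every vertex $x$ is adjacent to exactly one vertex $x'$ with $\ell(x')=\ell(x)+1$; for $\ell(x)\ge 1$ the set $N_x=\{y:\ y'=x\}$ of neighbours of $x$ on level $\ell(x)-1$ is finite and nonempty; $N_x=\emptyset$ if $\ell(x)=0$; there are no other edges. For $x\in\Gamma$, $\Gamma_x$ is the finite subtree consisting of $x$ and all its descendants, and $\Gamma'_x=\Gamma_x\cup\{x'\}$. Fix $\lambda_x>0$, $\beta_x\in\mathbb R$. The Jacobi matrix $J$ acts on functions $v:\Gamma\to\mathbb C$ by $(Jv)(x)=\lambda_x v(x')+\beta_x v(x)+\sum_{y\in N_x}\lambda_y v(y)$. The functions $P_{x,t}$ ($x\in\Gamma$, $t\in\Gamma'_x$) of the variable $z$ are defined recursively on $\ell(x)$: if $\ell(x)=0$, $P_{x,x}=1$ and $P_{x,x'}(z)=(z-\beta_x)/\lambda_x$. If $\ell(x)\ge1$: $P_{x,x}$ is the monic least common multiple of the polynomials $\{P_{y,x}:\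 y\in N_x\}$; for $y\in N_x$ and $t\in\Gamma_y$, $P_{x,t}=P_{x,x}P_{y,t}/P_{y,x}$; and $P_{x,x'}=\lambda_x^{-1}\big((z-\beta_x)P_{x,x}-\sum_{y\in N_x}\lambda_yP_{x,y}\big)$. *)

(* Defs.v *)
From HB Require Import structures.
From mathcomp Require Import all_boot all_order all_algebra.
Set Implicit Arguments. Unset Strict Implicit. Unset Printing Implicit Defensive.
Import Order.TTheory GRing.Theory Num.Theory.
Local Open Scope ring_scope.

Section JacobiTree.
Variables (C : numClosedFieldType) (V : eqType).
(* par x = x' (the neighbour one level up); lev = level; ch x = N_x (as a
   duplicate-free list); lam, bet = the coefficients lambda, beta. *)
Variables (par : V -> V) (lev : V -> nat) (ch : V -> seq V)
          (lam bet : V -> C).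

(* t \in Gamma_x  (t is x or a descendant of x) *)
Definition in_sub (x t : V) : bool :=
  (lev t <= lev x)%N && (iter (lev x - lev t) par t == x).

Definition in_sub' (x t : V) : bool := in_sub x t || (t == par x).

Definition lcmp (p q : {poly C}) : {poly C} := (p * q) %/ gcdp p q.

Definition monicize (p : {poly C}) : {poly C} := (lead_coef p)^-1 *: p.

Definition mlcm (s : seq {poly C}) : {poly C} := monicize (foldr lcmp 1 s).

(* Pr n x t = P_{x,t}, computed for a vertex x of level n
   (values for t outside Gamma'_x are irrelevant and set to 0). *)
Fixpoint Pr (n : nat) (x t : V) : {poly C} :=
  match n with
  | 0 =>
      if t == x then 1
      else if t == par x then (lam x)^-1 *: ('X - (bet x)%:P)
      else 0
  | n'.+1 =>
      let Pxx := mlcm [seq Pr n' y x | y <- ch x] in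
      if t == x then Pxx
      else if t == par x then
        (lam x)^-1 *: (('X - (bet x)%:P) * Pxx
           - \sum_(y <- ch x) lam y *: ((Pxx * Pr n' y y) %/ Pr n' y x))
      else if in_sub x t then
        (* the child y of x with t \in Gamma_y *)
        let y := iter (lev x - lev t).-1 par t in
        (Pxx * Pr n' y t) %/ Pr n' y x
      else 0
  end.

Definition P (x t : V) : {poly C} := Pr (lev x) x t.

Definition Jop (v : V -> C) (u : V) : C :=
  lam u * v (par u) + bet u * v u + \sum_(y <- ch u) lam y * v y.

End JacobiTree.

(* Main.v *)
Require Import Defs.
From HB Require Import structures.
From mathcomp Require Import all_boot all_order all_algebra zify ring.
Import Order.TTheory GRing.Theory Num.Theory.
Local Open Scope ring_scope.
Set Implicit Arguments. Unset Strict Implicit. Unset Printing Implicit Defensive.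

Section Lcm.
Variable C : numClosedFieldType.
Implicit Types p q : {poly C}.
Local Notation cjp p := (map_poly (@Num.Def.conjC C) p).

Lemma lcmpE p q : lcmp p q = p * (q %/ gcdp p q).
Proof. by rewrite /lcmp divp_mulA // dvdp_gcdr. Qed.

Lemma lcmp_dvdl p q : p %| lcmp p q.
Proof. by rewrite lcmpE dvdp_mulr. Qed.

Lemma lcmp_dvdr p q : q %| lcmp p q.
Proof. by rewrite /lcmp -divp_mulAC ?dvdp_gcdl // dvdp_mull. Qed.

Lemma lcmp_neq0 p q : p != 0 -> q != 0 -> lcmp p q != 0.
Proof.
move=> p0 q0; rewrite lcmpE mulf_neq0 //.
apply: contra q0 => /eqP h; rewrite -(divpK (dvdp_gcdr p q)) h mul0r //.
Qed.

Lemma lcmp_root p q z : root (lcmp p q) z -> root p z || root q z.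
Proof.
rewrite lcmpE rootM => /orP [->//|h]; apply/orP; right.
by rewrite -(divpK (dvdp_gcdr p q)) rootM h.
Qed.

Lemma cjp_lcmp p q : cjp (lcmp p q) = lcmp (cjp p) (cjp q).
Proof. by rewrite /lcmp map_divp rmorphM gcdp_map. Qed.

Lemma foldr_lcm_neq0 s : all (fun p => p != 0) s -> foldr (@lcmp C) 1 s != 0.
Proof.
elim: s => [|a s IH] /=; first by rewrite oner_eq0.
by case/andP=> a0 /IH h; apply: lcmp_neq0.
Qed.

Lemma foldr_lcm_dvd s p : p \in s -> p %| foldr (@lcmp C) 1 s.
Proof.
elim: s => [|a s IH] //=; rewrite in_cons => /orP [/eqP ->|/IH h].
  exact: lcmp_dvdl.
exact: dvdp_trans h (lcmp_dvdr _ _).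
Qed.

Lemma foldr_lcm_root s z : root (foldr (@lcmp C) 1 s) z -> has (fun p => root p z) s.
Proof.
elim: s => [|a s IH] /=; first by rewrite rootC oner_eq0.
by move/lcmp_root => /orP [->//|/IH ->]; rewrite orbT.
Qed.

Lemma cjp_foldr s : cjp (foldr (@lcmp C) 1 s) = foldr (@lcmp C) 1 (map (fun p => cjp p) s).
Proof. by elim: s => [|a s IH] /=; rewrite ?rmorph1 // cjp_lcmp IH. Qed.

Lemma mlcm_neq0 s : all (fun p => p != 0) s -> mlcm s != 0.
Proof.
move=> h; rewrite /mlcm /monicize scaler_eq0 negb_or invr_eq0 lead_coef_eq0.
by rewrite foldr_lcm_neq0.
Qed.

Lemma mlcm_lead s : all (fun p => p != 0) s -> lead_coef (mlcm s) = 1.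
Proof.
move=> h; rewrite /mlcm /monicize lead_coefZ mulVf // lead_coef_eq0.
exact: foldr_lcm_neq0.
Qed.

Lemma mlcm_dvd s p : all (fun p => p != 0) s -> p \in s -> p %| mlcm s.
Proof.
move=> h ps; rewrite /mlcm /monicize dvdpZr ?foldr_lcm_dvd //.
by rewrite invr_eq0 lead_coef_eq0 foldr_lcm_neq0.
Qed.

Lemma mlcm_root s z : root (mlcm s) z -> has (fun p => root p z) s.
Proof.
move=> H; apply: foldr_lcm_root; move: H.
rewrite /mlcm /monicize !rootE hornerZ mulf_eq0 => /orP [|//].
by rewrite invr_eq0 lead_coef_eq0 => /eqP ->; rewrite horner0.
Qed.

Lemma mlcm_cj s : all (fun p => cjp p == p) s -> cjp (mlcm s) = mlcm s.
Proof.
move=> h; have e : map (fun p => cjp p) s = s.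
  by elim: s h => [|a s IH] //= /andP [/eqP -> /IH ->].
have eF : cjp (foldr (@lcmp C) 1 s) = foldr (@lcmp C) 1 s by rewrite cjp_foldr e.
by rewrite /mlcm /monicize map_polyZ fmorphV -lead_coef_map eF.
Qed.
End Lcm.

Section Tree.
Variables (C : numClosedFieldType) (V : eqType)
  (par : V -> V) (lev : V -> nat) (ch : V -> seq V) (lam bet : V -> C).
Hypotheses (Hlev : forall x, lev (par x) = (lev x).+1)
  (Hch_uniq : forall x, uniq (ch x))
  (Hch : forall x y, (y \in ch x) = (par y == x))
  (Hch0 : forall x, (ch x == [::]) = (lev x == 0%N))
  (Hconn : forall x y, exists m n, iter m par x = iter n par y)
  (Hlam : forall x, 0 < lam x)
  (Hbet : forall x, bet x \is Num.real).

Local Notation ins := (in_sub par lev).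
Local Notation PP := (P par lev ch lam bet).

Lemma lev_iter k t : lev (iter k par t) = (lev t + k)%N.
Proof. by elim: k => [|k IH]; rewrite ?addn0 // iterS Hlev IH addnS. Qed.

Lemma in_subP x t : reflect (exists k, iter k par t = x) (ins x t).
Proof.
apply: (iffP andP) => [[_ /eqP h]|[k <-]]; first by exists (lev x - lev t)%N.
by rewrite lev_iter leq_addr addKn eqxx.
Qed.

Lemma ins_refl x : ins x x.
Proof. by apply/in_subP; exists 0%N. Qed.

Lemma ins_trans a b c : ins a b -> ins b c -> ins a c.
Proof.
move=> /in_subP [m <-] /in_subP [n <-]; apply/in_subP; exists (m + n)%N.
by rewrite iterD.
Qed.

Lemma ins_iter k x : ins (iter k par x) x.
Proof. by apply/in_subP; exists k. Qed.

Lemma ins_par x t : ins x t -> ins (par x) t.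
Proof. by move=> h; apply: ins_trans h; apply: (ins_iter 1). Qed.

Lemma ins_lev x t : ins x t -> (lev t <= lev x)%N.
Proof. by case/andP. Qed.

Lemma ins_eq x t : ins x t -> lev t = lev x -> t = x.
Proof. by move=> /in_subP [k <-]; rewrite lev_iter; case: k => // k; lia. Qed.

Lemma par_neq x : par x != x.
Proof. by apply/eqP => h; have := Hlev x; rewrite h; lia. Qed.

Lemma ins_npar x t : ins x t -> t != par x.
Proof. by move=> /ins_lev h; apply/eqP => e; move: h; rewrite e Hlev; lia. Qed.

Lemma ch_lev x y : y \in ch x -> lev x = (lev y).+1.
Proof. by rewrite Hch => /eqP <-. Qed.

Lemma ins_child x t : ins x t -> t != x ->
  let y := iter (lev x - lev t).-1 par t in (y \in ch x) && ins y t.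
Proof.
move=> /in_subP [k <-] ne; rewrite lev_iter addKn.
case: k ne => [|k] ne /=; first by rewrite eqxx in ne.
by rewrite Hch eqxx ins_iter.
Qed.

Lemma child_ins x y t : y \in ch x -> ins y t ->
  ins x t /\ iter (lev x - lev t).-1 par t = y.
Proof.
move=> yx /in_subP [k ek]; have ex : x = par y by move: yx; rewrite Hch => /eqP.
split; first by rewrite ex; apply: ins_par; rewrite -ek ins_iter.
by rewrite ex Hlev -ek lev_iter; have -> : ((lev t + k).+1 - lev t).-1 = k by lia.
Qed.

Lemma ins_ch x t u : ins x t -> u \in ch t -> ins x u.
Proof.
move=> h; rewrite Hch => /eqP e; apply: ins_trans h _; rewrite -e.
exact: (ins_iter 1).
Qed.

Lemma ins_par_in x t : ins x t -> t != x -> ins x (par t).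
Proof.
move=> /in_subP [[|k] <-]; first by rewrite eqxx.
by move=> _; rewrite iterSr ins_iter.
Qed.

Lemma ins_anc x t : exists m, forall k, (m <= k)%N -> ins (iter k par x) t.
Proof.
have [m [n e]] := Hconn x t; exists m => k mk.
rewrite -(subnK mk) iterD; apply: ins_trans (ins_iter _ _) _.
by rewrite e ins_iter.
Qed.

Lemma P0 x : lev x = 0%N -> PP x x = 1.
Proof. by move=> h; rewrite /P h /= eqxx. Qed.

Lemma P0par x : lev x = 0%N -> PP x (par x) = (lam x)^-1 *: ('X - (bet x)%:P).
Proof. by move=> h; rewrite /P h /= (negbTE (par_neq x)) eqxx. Qed.

Lemma Pxx x : (0 < lev x)%N -> PP x x = mlcm [seq PP y x | y <- ch x].
Proof.
move=> h; rewrite /P; case e: (lev x) h => [|n] // _ /=; rewrite eqxx.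
congr mlcm; apply/eq_in_map => y /ch_lev; rewrite e => -[<-] //.
Qed.

Lemma P_child x y t : y \in ch x -> ins y t ->
  PP x t = (PP x x * PP y t) %/ PP y x.
Proof.
move=> yx yt; have [xt ey] := child_ins yx yt.
have ne : t != x by apply/eqP => e; move: (ins_lev yt) (ch_lev yx); rewrite e; lia.
have ne2 := ins_npar xt.
rewrite {1 2}/P (ch_lev yx) /= (negbTE ne) (negbTE ne2) xt ey eqxx.
by rewrite /P.
Qed.

Lemma Ppar x : PP x (par x) = (lam x)^-1 *:
  (('X - (bet x)%:P) * PP x x - \sum_(y <- ch x) lam y *: PP x y).
Proof.
case e: (lev x) => [|n].
  rewrite P0par // P0 //; have /eqP -> : ch x == [::] by rewrite Hch0 e.
  by rewrite big_nil mulr1 subr0.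
have ePxx : PP x x = mlcm [seq PP y x | y <- ch x] by apply: Pxx; rewrite e.
have em : [seq Pr par lev ch lam bet n y x | y <- ch x] = [seq PP y x | y <- ch x].
  by apply/eq_in_map => y /ch_lev; rewrite e => -[->].
rewrite {1}/P e /= (negbTE (par_neq x)) eqxx em -ePxx.
congr (_ *: (_ - _)); rewrite !big_seq; apply: eq_bigr => y yx.
rewrite (P_child yx (ins_refl y)).
by have := ch_lev yx; rewrite e => -[->].
Qed.

Local Notation cjp p := (map_poly (@Num.Def.conjC C) p).

Lemma lamR x : (lam x)^* = lam x.
Proof. by apply/CrealP; apply: gtr0_real. Qed.

Lemma lam_neq0 x : lam x != 0.
Proof. by rewrite gt_eqF. Qed.

Lemma betR x : (bet x)^* = bet x.
Proof. exact/CrealP. Qed.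

Lemma dvd_child x y : (forall y, y \in ch x -> PP y x != 0) -> y \in ch x ->
  PP y x %| PP x x.
Proof.
move=> H yx; rewrite Pxx; last by rewrite (ch_lev yx).
apply: mlcm_dvd; last exact: map_f.
by apply/allP => p /mapP [y' y'x ->]; apply: H.
Qed.

Lemma scale x y w : (forall y, y \in ch x -> PP y x != 0) -> y \in ch x ->
  ins y w || (w == par y) -> PP x w = (PP x x %/ PP y x) * PP y w.
Proof.
move=> H yx /orP [yw|/eqP ->].
  by rewrite (P_child yx yw) divp_mulAC // dvd_child.
have -> : par y = x by move: yx; rewrite Hch => /eqP.
by rewrite divpK // dvd_child.
Qed.

Lemma A_inv n : forall x, lev x = n ->
  [/\ PP x x != 0, lead_coef (PP x x) = 1, cjp (PP x x) = PP x x,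
      cjp (PP x (par x)) = PP x (par x) & lead_coef (PP x (par x)) = (lam x)^-1
    /\ size (PP x (par x)) = (size (PP x x)).+1].
Proof.
elim: n => [|n IH] x h.
  rewrite P0 // P0par //; split.
  - exact: oner_neq0.
  - exact: lead_coef1.
  - exact: rmorph1.
  - by rewrite map_polyZ map_polyXsubC fmorphV /= lamR betR.
  - split; first by rewrite lead_coefZ lead_coefXsubC mulr1.
    by rewrite size_scale ?invr_eq0 ?lam_neq0 // size_XsubC size_poly1.
have Hc : forall y, y \in ch x -> [/\ PP y y != 0, lead_coef (PP y y) = 1,
    cjp (PP y y) = PP y y, cjp (PP y x) = PP y x & lead_coef (PP y x) = (lam y)^-1
    /\ size (PP y x) = (size (PP y y)).+1].
  move=> y yx; have -> : x = par y by move: yx; rewrite Hch => /eqP.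
  by apply: IH; move: (ch_lev yx); rewrite h => -[].
have Hnz : forall y, y \in ch x -> PP y x != 0.
  move=> y yx; case: (Hc y yx) => _ _ _ _ [l _].
  by rewrite -lead_coef_eq0 l invr_eq0 lam_neq0.
have Hall : all (fun p => p != 0) [seq PP y x | y <- ch x].
  by apply/allP => p /mapP [y yx ->]; apply: Hnz.
have eQ := Pxx (ltac:(by rewrite h) : (0 < lev x)%N).
have Q0 : PP x x != 0 by rewrite eQ mlcm_neq0.
have QL : lead_coef (PP x x) = 1 by rewrite eQ mlcm_lead.
have QR : cjp (PP x x) = PP x x.
  rewrite eQ mlcm_cj //; apply/allP => p /mapP [y yx ->].
  by case: (Hc y yx) => _ _ _ -> _.
have Hd : forall y, y \in ch x -> let d := PP x x %/ PP y x in
    [/\ d * PP y x = PP x x, d != 0 & (size d + size (PP y y) = size (PP x x))%N].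
  move=> y yx /=; have e := divpK (dvd_child Hnz yx); split => //.
    by apply: contra Q0 => /eqP d0; rewrite -e d0 mul0r.
  have d0 : PP x x %/ PP y x != 0 by apply: contra Q0 => /eqP d0; rewrite -e d0 mul0r.
  case: (Hc y yx) => Pyy0 _ _ _ [_ sz].
  by rewrite -{2}e size_mul // ?Hnz // sz addnS.
set S := \sum_(y <- ch x) lam y *: PP x y.
have Ssz : (size S < size (PP x x))%N.
  rewrite /S big_seq; apply: (big_ind (fun p : {poly C} => is_true (size p < size (PP x x))%N)).
  - by rewrite size_poly0 size_poly_gt0.
  - by move=> p q hp hq; rewrite (leq_ltn_trans (size_polyD _ _)) // gtn_max hp hq.
  move=> y yx; rewrite (leq_ltn_trans (size_scale_leq _ _)) //.
  rewrite (scale Hnz yx); last by rewrite ins_refl.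
  case: (Hd y yx) => _ d0 sz; case: (Hc y yx) => Pyy0 _ _ _ _.
  rewrite (leq_ltn_trans (size_polyMleq _ _)) // -sz.
  by move: d0 Pyy0; rewrite -!size_poly_gt0; case: (size (PP y y)) => // k; case: (size _) => // m; rewrite addnS.
have SR : cjp S = S.
  rewrite /S rmorph_sum big_seq [RHS]big_seq; apply: eq_bigr => y yx.
  rewrite /= map_polyZ /= lamR (P_child yx (ins_refl y)) map_divp rmorphM /= QR.
  by case: (Hc y yx) => _ _ -> -> _.
have AS : (size S < size ((('X - (bet x)%:P) * PP x x)%R))%N.
  by rewrite size_mul ?polyXsubC_eq0 // size_XsubC /=; apply: ltnW.
rewrite Ppar -/S; split => //.
- by rewrite map_polyZ rmorphB /= rmorphM /= SR QR map_polyXsubC fmorphV /= lamR betR.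
- split; first by rewrite lead_coefZ lead_coefDl ?size_polyN // lead_coefM lead_coefXsubC QL !mulr1.
  rewrite size_scale ?invr_eq0 ?lam_neq0 // size_polyDl ?size_polyN //.
  by rewrite size_mul ?polyXsubC_eq0 // size_XsubC.
Qed.

Definition rr (z g : C) := (g - g^*) / (z - z^*).

Lemma rr_key (z b : C) (I : seq V) (l g : V -> C) : z - z^* != 0 -> b^* = b ->
  (forall i, i \in I -> (l i)^* = l i /\ g i != 0) ->
  rr z (z - b - \sum_(i <- I) l i ^+ 2 / g i)
  = 1 + \sum_(i <- I) (l i ^+ 2 / (g i * (g i)^*)) * rr z (g i).
Proof.
move=> w0 hb hi; rewrite /rr rmorphB /= rmorphB /= rmorph_sum /= hb.
have -> : z - b - \sum_(i <- I) l i ^+ 2 / g i -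
   (z^* - b - \sum_(i <- I) (l i ^+ 2 / g i)^*) =
   (z - z^*) + \sum_(i <- I) - (l i ^+ 2 / g i - (l i ^+ 2 / g i)^*).
  by rewrite sumrN sumrB; ring.
rewrite mulrDl mulfV // mulr_suml; congr (_ + _).
rewrite !big_seq; apply: eq_bigr => i iI; have [li gi] := hi i iI.
rewrite rmorphM /= fmorphV /= rmorphXn /= li.
have gc : (g i)^* != 0 by rewrite conjC_eq0.
by field; rewrite w0 gi gc.
Qed.

Lemma B_inv z : z \notin Num.real -> forall n x, lev x = n ->
  (PP x x).[z] != 0 /\ 0 < rr z (lam x * (PP x (par x)).[z] / (PP x x).[z]).
Proof.
move=> zn; have w0 : z - z^* != 0.
  by rewrite subr_eq0 eq_sym -CrealE.
elim=> [|n IH] x h.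
  rewrite P0 // P0par // hornerZ hornerXsubC -[1]polyC1 hornerC oner_neq0; split => //.
  have -> : lam x * ((lam x)^-1 * (z - bet x)) / 1 = z - bet x.
    by field; rewrite lam_neq0.
  rewrite /rr rmorphB /= betR.
  have -> : z - bet x - (z^* - bet x) = z - z^* by ring.
  by rewrite mulfV.
have [Q0 _ _ _ _] := A_inv (erefl (lev x)).
have Hc : forall y, y \in ch x -> (PP y y).[z] != 0 /\
    0 < rr z (lam y * (PP y x).[z] / (PP y y).[z]).
  move=> y yx; have -> : x = par y by move: yx; rewrite Hch => /eqP.
  by apply: IH; move: (ch_lev yx); rewrite h => -[].
have Hnz : forall y, y \in ch x -> PP y x != 0.
  move=> y yx; have -> : x = par y by move: yx; rewrite Hch => /eqP.
  have [_ _ _ _ [l _]] := A_inv (erefl (lev y)).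
  by rewrite -lead_coef_eq0 l invr_eq0 lam_neq0.
have Hz : forall y, y \in ch x -> (PP y x).[z] != 0.
  move=> y yx; have [_ r] := Hc y yx; apply/eqP => e; move: r.
  by rewrite e mulr0 mul0r /rr rmorph0 subr0 mul0r ltxx.
have eQ := Pxx (ltac:(by rewrite h) : (0 < lev x)%N).
have Qz : (PP x x).[z] != 0.
  rewrite eQ; apply/negP => /mlcm_root /hasP [p /mapP [y yx ->]].
  by rewrite rootE (negbTE (Hz y yx)).
split => //.
set g := fun y => lam y * (PP y x).[z] / (PP y y).[z].
have -> : lam x * (PP x (par x)).[z] / (PP x x).[z] =
    z - bet x - \sum_(y <- ch x) lam y ^+ 2 / g y.
  rewrite Ppar hornerZ hornerD hornerN hornerM hornerXsubC horner_sum.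
  have -> : \sum_(y <- ch x) (lam y *: PP x y).[z] =
      (PP x x).[z] * \sum_(y <- ch x) lam y ^+ 2 / g y.
    rewrite mulr_sumr !big_seq; apply: eq_bigr => y yx.
    rewrite hornerZ (scale Hnz yx); last by rewrite ins_refl.
    have e := divpK (dvd_child Hnz yx).
    have ed : (PP x x %/ PP y x).[z] = (PP x x).[z] / (PP y x).[z].
      by rewrite -{2}e hornerM mulfK // Hz.
    rewrite hornerM ed /g; have [yy _] := Hc y yx; have yz := Hz y yx.
    by field; rewrite yy yz lam_neq0.
  by field; rewrite Qz lam_neq0.
rewrite rr_key //; first last.
- move=> i iI; split; first exact: lamR.
  have [yy _] := Hc i iI.
  by rewrite /g mulf_neq0 ?invr_eq0 // mulf_neq0 ?lam_neq0 ?Hz.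
- exact: betR.
apply: ltr_wpDr; last exact: ltr01.
rewrite big_seq; apply: sumr_ge0 => y yx; apply: ltW; apply: mulr_gt0; last by case: (Hc y yx).
have [yy _] := Hc y yx.
have gy : g y != 0 by rewrite /g mulf_neq0 ?invr_eq0 // mulf_neq0 ?lam_neq0 ?Hz.
by rewrite divr_gt0 ?mul_conjC_gt0 // exprn_gt0.
Qed.

Lemma Hnz_all x y : y \in ch x -> PP y x != 0.
Proof.
move=> yx; have -> : x = par y by move: yx; rewrite Hch => /eqP.
have [_ _ _ _ [l _]] := A_inv (erefl (lev y)).
by rewrite -lead_coef_eq0 l invr_eq0 lam_neq0.
Qed.

Lemma EQ n : forall x, lev x = n -> forall u, ins x u ->
  lam u *: PP x (par u) + bet u *: PP x u + \sum_(c <- ch u) lam c *: PP x c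
  = 'X * PP x u.
Proof.
have base : forall x, lam x *: PP x (par x) + bet x *: PP x x
    + \sum_(c <- ch x) lam c *: PP x c = 'X * PP x x.
  move=> x; rewrite Ppar scalerA mulfV ?lam_neq0 // scale1r -mul_polyC.
  set S := \sum_(_ <- _) _; rewrite mulrBl; ring.
elim: n => [|n IH] x h u xu.
  have e : u = x by apply: (ins_eq xu); move: (ins_lev xu); rewrite h; lia.
  by rewrite e base.
have [->|ne] := eqVneq u x; first exact: base.
have /andP [yx yu] := ins_child xu ne.
set y := iter _ par u in yx yu.
have Hnz : forall y, y \in ch x -> PP y x != 0 by move=> ? /Hnz_all.
have sc := scale Hnz yx.
have IHy := IH y (ltac:(by move: (ch_lev yx); rewrite h => -[])) u yu.
rewrite (sc (par u)); last first.
  have [e|ne2] := eqVneq u y; first by rewrite e eqxx orbT.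
  by rewrite ins_par_in.
rewrite (sc u) ?yu //.
rewrite big_seq (eq_bigr (fun c => (PP x x %/ PP y x) * (lam c *: PP y c))); last first.
  by move=> c cu; rewrite (sc c) ?(ins_ch yu cu) // scalerAr.
by rewrite -big_seq -mulr_sumr !scalerAr -!mulrDr IHy mulrCA.
Qed.

Lemma D_inv n : forall x, lev x = n -> forall t, ins x t ->
  cjp (PP x t) = PP x t /\ 0 < lead_coef (PP x t).
Proof.
elim: n => [|n IH] x h t xt.
  have e : t = x by apply: (ins_eq xt); move: (ins_lev xt); rewrite h; lia.
  by have [_ L R _ _] := A_inv (erefl (lev x)); rewrite e R L ltr01.
have [-> | ne] := eqVneq t x.
  by have [_ L R _ _] := A_inv (erefl (lev x)); rewrite R L ltr01.
have /andP [yx yt] := ins_child xt ne.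
set y := iter _ par t in yx yt.
have Hnz : forall y, y \in ch x -> PP y x != 0 by move=> ? /Hnz_all.
have [Ry Ly] := IH y (ltac:(by move: (ch_lev yx); rewrite h => -[])) t yt.
have ex : x = par y by move: yx; rewrite Hch => /eqP.
have [_ QL QR _ _] := A_inv (erefl (lev x)).
have [_ _ _ Ryx [Lyx _]] := A_inv (erefl (lev y)).
rewrite -ex in Ryx Lyx.
rewrite (scale Hnz yx) ?yt //; split.
  by rewrite rmorphM /= map_divp QR Ryx Ry.
have e := congr1 lead_coef (divpK (dvd_child Hnz yx)).
rewrite lead_coefM Lyx QL in e.
rewrite lead_coefM; have -> : lead_coef (PP x x %/ PP y x) = lam y.
  apply: (mulIf (invr_neq0 (lam_neq0 y))); rewrite e mulfV //; exact: lam_neq0.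
by rewrite mulr_gt0.
Qed.

Lemma E_inv n : forall x, lev x = n -> forall y t, ins x y ->
  ins y t || (t == par y) -> PP y t %| PP x t.
Proof.
elim: n => [|n IH] x h y t xy yt.
  have -> : y = x by apply: (ins_eq xy); move: (ins_lev xy); rewrite h; lia.
  exact: dvdpp.
have [-> | ne] := eqVneq y x; first exact: dvdpp.
have /andP [cx cy] := ins_child xy ne.
set c := iter _ par y in cx cy.
have Hnz : forall y, y \in ch x -> PP y x != 0 by move=> ? /Hnz_all.
have ct : ins c t || (t == par c).
  case/orP: yt => [yt|/eqP ->]; first by rewrite (ins_trans cy yt).
  have [e|ne2] := eqVneq y c; first by rewrite e eqxx orbT.
  by rewrite ins_par_in.
rewrite (scale Hnz cx ct); apply: dvdp_mull.
exact: (IH c (ltac:(by move: (ch_lev cx); rewrite h => -[])) y t cy yt).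
Qed.

Lemma cj_real (p : {poly C}) : cjp p = p -> p \is a polyOver Num.real.
Proof. by move=> h; apply/polyOverP => i; apply/CrealP; rewrite -coef_map h. Qed.

Lemma eigen x z : z \notin Num.real ->
  exists v : V -> C,
    (exists u, v u != 0)
    /\ (forall u, Jop par ch lam bet v u = z * v u)
    /\ (forall t, in_sub' par lev x t -> v t = (PP x t).[z]).
Proof.
move=> zn; pose a k := iter k par x.
have aS : forall k, a k \in ch (a k.+1) by move=> k; rewrite Hch /a iterS eqxx.
have Hnz : forall y w, y \in ch w -> forall y', y' \in ch w -> PP y' w != 0.
  by move=> ???? /Hnz_all.
have Qz : forall w, (PP w w).[z] != 0 by move=> w; case: (B_inv zn (erefl (lev w))).
have dz : forall y w, y \in ch w -> (PP w w %/ PP y w).[z] != 0.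
  move=> y w yw; apply: contra (Qz w) => /eqP h.
  by rewrite -(divpK (dvd_child (Hnz _ _ yw) yw)) hornerM h mul0r.
have Nz : forall k, (PP (a k) x).[z] != 0.
  elim=> [|k IH]; first exact: Qz.
  rewrite (scale (Hnz _ _ (aS k)) (aS k)) ?ins_iter // hornerM.
  by rewrite mulf_neq0 // dz.
pose R k t := (PP (a k) t).[z] / (PP (a k) x).[z].
have Rc : forall j k t, ins (a k) t -> R (j + k)%N t = R k t.
  elim=> [//|j IH] k t kt; rewrite addSn -(IH k t kt) /R.
  have jt : ins (a (j + k)%N) t by rewrite /a iterD; apply: ins_trans (ins_iter _ _) kt.
  have jx : ins (a (j + k)%N) x by rewrite /a ins_iter.
  have st : forall w, ins (a (j + k)%N) w -> PP (a (j + k).+1) w =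
      (PP (a (j + k).+1) (a (j + k).+1) %/ PP (a (j + k)%N) (a (j + k).+1)) * PP (a (j + k)%N) w.
    by move=> w hw; apply: scale; rewrite ?hw // => ? /Hnz_all.
  rewrite (st t jt) (st x jx).
  rewrite !hornerM; have := dz _ _ (aS (j + k)%N); have := Nz (j + k)%N.
  by move=> n1 n2; field; rewrite n1 n2.
have ex : forall t, exists k, ins (a k) t.
  by move=> t; have [m hm] := ins_anc x t; exists m; apply: hm.
pose mt t := ex_minn (ex t).
have mtP : forall t, ins (a (mt t)) t by move=> t; rewrite /mt; case: ex_minnP.
pose v t := R (mt t) t * (PP x x).[z].
have vE : forall k t, ins (a k) t -> v t = R k t * (PP x x).[z].
  move=> k t kt; rewrite /v; congr (_ * _).
  rewrite -(Rc (k - mt t)%N (mt t) t (mtP t)) -(Rc (mt t - k)%N k t kt).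
  by congr R; lia.
exists v; split; last split.
- exists x; rewrite (vE 0%N x (ins_refl x)) /R /=.
  by rewrite mulf_neq0 // ?mulf_neq0 ?invr_eq0 // Qz.
- move=> u; have [m0 hm0] := ins_anc x (par u).
  have k0 := hm0 m0 (leqnn _).
  have ku : ins (a m0) u by apply: ins_trans k0 (ins_iter 1 u).
  have := congr1 (fun p => p.[z]) (EQ (erefl (lev (a m0))) ku).
  rewrite /= !hornerD !hornerZ horner_sum hornerM hornerX => heq.
  rewrite /Jop (vE _ _ k0) (vE _ _ ku).
  rewrite big_seq (eq_bigr (fun c => lam c * (PP (a m0) c).[z] *
      ((PP x x).[z] / (PP (a m0) x).[z]))); last first.
    by move=> c cu; rewrite (vE _ _ (ins_ch ku cu)) /R; ring.
  rewrite -mulr_suml -big_seq.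
  have heq' : \sum_(c <- ch u) lam c * (PP (a m0) c).[z] = z * (PP (a m0) u).[z]
      - lam u * (PP (a m0) (par u)).[z] - bet u * (PP (a m0) u).[z].
    rewrite -heq; have -> : \sum_(i <- ch u) (lam i *: PP (a m0) i).[z] = \sum_(c <- ch u) lam c * (PP (a m0) c).[z] by apply: eq_bigr => c _; rewrite hornerZ.
    ring.
  rewrite heq' /R; have nD := Nz m0.
  by field.
- move=> t /orP [xt|/eqP ->].
    by rewrite (vE 0%N t xt) /R /= divfK // Qz.
  have xa : x \in ch (a 1%N) by exact: (aS 0%N).
  rewrite (vE 1%N (par x) (ins_refl _)) /R.
  have st : forall w, ins x w || (w == par x) -> PP (a 1%N) w =
      (PP (a 1%N) (a 1%N) %/ PP x (a 1%N)) * PP x w.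
    by move=> w hw; apply: scale => // ? /Hnz_all.
  rewrite (st (par x)) ?eqxx ?orbT // (st x) ?ins_refl //.
  rewrite !hornerM; have := dz _ _ xa; have := Qz x.
  by move=> n1 n2; field; rewrite n1 n2.
Qed.

Lemma main : forall x : V,
    (forall t, in_sub' par lev x t ->
       PP x t \is a polyOver Num.real /\ 0 < lead_coef (PP x t))
    /\ (forall z : C, z \notin Num.real ->
         exists v : V -> C,
           (exists u, v u != 0)
           /\ (forall u, Jop par ch lam bet v u = z * v u)
           /\ (forall t, in_sub' par lev x t -> v t = (PP x t).[z]))
    /\ (forall y t, in_sub par lev x y -> in_sub' par lev y t ->
         PP y t %| PP x t).
Proof.
move=> x; split; [|split].
- move=> t /orP [xt|/eqP ->].
    have [R L] := D_inv (erefl (lev x)) xt.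
    by split; [exact: cj_real|].
  have [_ _ _ R [L _]] := A_inv (erefl (lev x)).
  by split; [exact: cj_real| rewrite L invr_gt0].
- by move=> z zn; apply: eigen.
- by move=> y t xy yt; exact: (E_inv (erefl (lev x)) xy yt).
Qed.
End Tree.

Unset Implicit Arguments.

Theorem proposition1 (C : numClosedFieldType) (V : eqType)
  (par : V -> V) (lev : V -> nat) (ch : V -> seq V) (lam bet : V -> C)
  (Hlev : forall x, lev (par x) = (lev x).+1)
  (Hch_uniq : forall x, uniq (ch x))
  (Hch : forall x y, (y \in ch x) = (par y == x))
  (Hch0 : forall x, (ch x == [::]) = (lev x == 0%N))
  (Hconn : forall x y, exists m n, iter m par x = iter n par y)
  (Hlam : forall x, 0 < lam x)
  (Hbet : forall x, bet x \is Num.real) :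
  forall x : V,
    (forall t, in_sub' par lev x t ->
       P par lev ch lam bet x t \is a polyOver Num.real
       /\ 0 < lead_coef (P par lev ch lam bet x t))
    /\ (forall z : C, z \notin Num.real ->
         exists v : V -> C,
           (exists u, v u != 0)
           /\ (forall u, Jop par ch lam bet v u = z * v u)
           /\ (forall t, in_sub' par lev x t -> v t = (P par lev ch lam bet x t).[z]))
    /\ (forall y t, in_sub par lev x y -> in_sub' par lev y t ->
         P par lev ch lam bet y t %| P par lev ch lam bet x t).
Proof. by apply: main. Qed.
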